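(* Let $\Phi$ be a channel matrix whose rows $P^1,\dots,P^4\in\Delta^n$ are in general position, let $Q^0$ be the equidistant point from $P^1,\dots,P^4$ and $\boldsymbol\lambda^0$ its barycentric coordinate. If $\lambda^0_i\ge0$ for $i=1,\dots,4$, then the output distribution achieving the channel capacity is $Q^\ast=Q^0$ and the channel capacity is $C=D(P^1\|Q^0)$.
   Context: $\Delta^n=\{Q:Q_j>0,\sum_jQ_j=1\}$, $\bar\Delta^m=\{\boldsymbol\lambda:\lambda_i\ge0,\sum_i\lambda_i=1\}$; $D(Q\|Q')=\sum_jQ_j\log(Q_j/Q'_j)$. Rows are in general position if $P^2-P^1,\dots,P^m-P^1$ are linearly independent. $L(S^1,\dots,S^r)=\{\sum_i\lambda_iS^i:\sum_i\lambda_i=1\}\cap\Delta^n$. The barycentric coordinate of $Q\in L(P^1,\dots,P^m)$ is the unique $\boldsymbol\lambda$ with $\sum_i\lambda_i=1$, $Q=\sum_i\lambda_iP^i$. The equidistant point is the unique $Q^0\in L(P^1,\dots,P^m)$ with all $D(P^i\|Q^0)$ equal. Mutual information $I(\boldsymbol\lambda,\Phi)=\sum_{i,j}\lambda_iP^i_j\log(P^i_j/Q_j)$ with $Q=\boldsymbol\lambda\Phi$; capacity $C=\max_{\boldsymbol\lambda\in\bar\Delta^m}I(\boldsymbol\lambda,\Phi)$; the capacity-achieving output distribution is $Q^\ast=\boldsymbol\lambda^\ast\Phi$ for a maximizer $\boldsymbol\lambda^\ast$ (unique). *)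

(* Defs.v *)
From HB Require Import structures.
From mathcomp Require Import all_boot all_order all_algebra.
From mathcomp Require Import all_classical all_reals all_analysis.
Set Implicit Arguments. Unset Strict Implicit. Unset Printing Implicit Defensive.
Import Order.TTheory GRing.Theory Num.Theory.
Local Open Scope classical_set_scope.
Local Open Scope ring_scope.

Section Defs.
Variable R : realType.

Definition in_open_simplex n (Q : 'rV[R]_n) : Prop :=
  (forall j, 0 < Q 0 j) /\ \sum_j Q 0 j = 1.

Definition in_closed_simplex m (l : 'rV[R]_m) : Prop :=
  (forall i, 0 <= l 0 i) /\ \sum_i l 0 i = 1.

Definition KL n (P Q : 'rV[R]_n) : R := \sum_j P 0 j * ln (P 0 j / Q 0 j).

Definition general_position m n (Phi : 'M[R]_(m.+1, n)) : bool :=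
  row_free (\matrix_(i < m) (row (lift ord0 i) Phi - row ord0 Phi)).

Definition in_affine_hull_simplex m n (Phi : 'M[R]_(m, n)) (Q : 'rV[R]_n) : Prop :=
  (exists l : 'rV[R]_m, \sum_i l 0 i = 1 /\ Q = l *m Phi) /\ in_open_simplex Q.

Definition barycentric m n (Phi : 'M[R]_(m, n)) (Q : 'rV[R]_n) (l : 'rV[R]_m) : Prop :=
  \sum_i l 0 i = 1 /\ Q = l *m Phi.

Definition equidistant_point m n (Phi : 'M[R]_(m, n)) (Q : 'rV[R]_n) : Prop :=
  in_affine_hull_simplex Phi Q /\
  forall i j, KL (row i Phi) Q = KL (row j Phi) Q.

Definition mutual_info m n (l : 'rV[R]_m) (Phi : 'M[R]_(m, n)) : R :=
  \sum_i \sum_j l 0 i * Phi i j * ln (Phi i j / (l *m Phi) 0 j).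

Definition capacity m n (Phi : 'M[R]_(m, n)) : R :=
  sup [set mutual_info l Phi | l in [set l | in_closed_simplex l]].

Definition capacity_achieving m n (Phi : 'M[R]_(m, n)) (l : 'rV[R]_m) : Prop :=
  in_closed_simplex l /\ mutual_info l Phi = capacity Phi.

End Defs.

(* Main.v *)
Require Import Defs.
From HB Require Import structures.
From mathcomp Require Import all_boot all_order all_algebra.
From mathcomp Require Import all_classical all_reals all_analysis.
From mathcomp Require Import ring lra.
Import Order.TTheory GRing.Theory Num.Theory.
Local Open Scope ring_scope.

Section G.
Variable R : realType.

Lemma lnflip (a b : R) : 0 < a -> 0 < b -> ln (a / b) = - ln (b / a).
Proof. move=> ha hb; by rewrite -lnV ?invf_div // posrE divr_gt0. Qed.

Lemma gibbs_le (a b : R) : 0 < a -> 0 < b -> a - b <= a * ln (a / b).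
Proof.
move=> ha hb; have h := expR_ge1Dx (ln (b / a)).
rewrite lnK ?posrE ?divr_gt0 // in h.
rewrite lnflip //.
have -> : a - b = a * (1 - b / a) by field; rewrite gt_eqF.
apply: ler_wpM2l; [exact: ltW|lra].
Qed.

Lemma gibbs_eq (a b : R) : 0 < a -> 0 < b -> a * ln (a / b) = a - b -> a = b.
Proof.
move=> ha hb e; apply/eqP; apply/negPn/negP => nab.
have nz : ln (b / a) != 0.
  rewrite ln_eq0 ?divr_gt0 //; apply/negP => /eqP h.
  have : b / a * a = a by rewrite h mul1r.
  rewrite divfK ?gt_eqF // => eba; by rewrite eba eqxx in nab.
have h := expR_gt1Dx nz.
rewrite lnK ?posrE ?divr_gt0 // in h.
move: e; rewrite lnflip //.
have -> : a - b = a * (1 - b / a) by field; rewrite gt_eqF.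
move/(mulfI (lt0r_neq0 ha)) => e.
lra.
Qed.

Lemma KLsplit n (Q Q0 : 'rV[R]_n) : in_open_simplex Q -> in_open_simplex Q0 ->
  KL Q Q0 = \sum_j (Q 0 j * ln (Q 0 j / Q0 0 j) - (Q 0 j - Q0 0 j)).
Proof.
move=> [hQ sQ] [hQ0 sQ0]; rewrite sumrB sumrB sQ sQ0 subrr subr0 /KL //.
Qed.

Lemma KL_ge0 n (Q Q0 : 'rV[R]_n) : in_open_simplex Q -> in_open_simplex Q0 ->
  0 <= KL Q Q0.
Proof.
move=> oQ oQ0; rewrite KLsplit //; apply: sumr_ge0 => j _.
rewrite subr_ge0; apply: gibbs_le; [exact: oQ.1|exact: oQ0.1].
Qed.

Lemma KL_eq0 n (Q Q0 : 'rV[R]_n) : in_open_simplex Q -> in_open_simplex Q0 ->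
  KL Q Q0 = 0 -> Q = Q0.
Proof.
move=> oQ oQ0; rewrite KLsplit // => /eqP; rewrite psumr_eq0.
  move/allP => H; apply/rowP => j;
  have /implyP := H j (mem_index_enum _) => /(_ isT) /eqP /eqP.
  rewrite subr_eq0 => /eqP e; apply: gibbs_eq; [exact: oQ.1|exact: oQ0.1|by rewrite e].
move=> j _; rewrite subr_ge0; apply: gibbs_le; [exact: oQ.1|exact: oQ0.1].
Qed.

Section Ch.
Variables (m n : nat) (Phi : 'M[R]_(m, n)).
Hypothesis hrows : forall i, in_open_simplex (row i Phi).

Lemma Phi_pos i j : 0 < Phi i j.
Proof. by have := (hrows i).1 j; rewrite mxE. Qed.

Lemma Q_pos l : in_closed_simplex l -> forall j, 0 < (l *m Phi) 0 j.
Proof.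
move=> [hl sl] j; rewrite mxE.
have hge : forall i, true -> 0 <= l 0 i * Phi i j.
  by move=> i _; rewrite mulr_ge0 // ltW // Phi_pos.
rewrite lt_def sumr_ge0 ?andbT //.
apply/negP => /eqP /(psumr_eq0P hge) H.
have : \sum_i l 0 i = 0.
  apply: big1 => i _; have := H i isT.
  by move/eqP; rewrite mulf_eq0 (gt_eqF (Phi_pos i j)) orbF => /eqP.
by rewrite sl; apply/eqP; rewrite oner_eq0.
Qed.

Lemma Q_sum l : in_closed_simplex l -> \sum_j (l *m Phi) 0 j = 1.
Proof.
move=> [hl sl].
under eq_bigr do rewrite mxE.
rewrite exchange_big /= -sl; apply: eq_bigr => i _.
rewrite -mulr_sumr; have := (hrows i).2.
under eq_bigr do rewrite mxE.
by move=> ->; rewrite mulr1.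
Qed.

Lemma Q_open l : in_closed_simplex l -> in_open_simplex (l *m Phi).
Proof. by move=> hl; split; [exact: Q_pos|exact: Q_sum]. Qed.

Lemma mi_id (Q0 : 'rV[R]_n) d l : in_open_simplex Q0 ->
  (forall i, KL (row i Phi) Q0 = d) -> in_closed_simplex l ->
  mutual_info l Phi = d - KL (l *m Phi) Q0.
Proof.
move=> oQ0 hd hl; rewrite /mutual_info.
have e : forall i j, l 0 i * Phi i j * ln (Phi i j / (l *m Phi) 0 j) =
   l 0 i * (Phi i j * ln (Phi i j / Q0 0 j)) -
   l 0 i * Phi i j * ln ((l *m Phi) 0 j / Q0 0 j).
  move=> i j.
  have p1 := Phi_pos i j; have p2 := @Q_pos l hl j; have p3 := oQ0.1 j.
  rewrite !ln_div ?posrE //; ring.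
under eq_bigr do under eq_bigr do rewrite e.
under eq_bigr do rewrite sumrB -mulr_sumr.
rewrite sumrB; congr (_ - _).
  rewrite -[RHS]mulr1 -hl.2 mulr_sumr; apply: eq_bigr => i _.
  rewrite -(hd i) /KL mulrC; congr (_ * _); apply: eq_bigr => j _; by rewrite mxE.
rewrite exchange_big /KL; apply: eq_bigr => j _.
rewrite -mulr_suml; congr (_ * _); by rewrite [in RHS]mxE.
Qed.
End Ch.
End G.

Theorem theorem17 (R : realType) (n : nat) (Phi : 'M[R]_(4, n))
    (Q0 : 'rV[R]_n) (l0 : 'rV[R]_4) :
  (forall i : 'I_4, in_open_simplex (row i Phi)) ->
  general_position Phi ->
  equidistant_point Phi Q0 ->
  barycentric Phi Q0 l0 ->
  (forall i : 'I_4, 0 <= l0 0 i) ->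
  [/\ capacity Phi = KL (row 0 Phi) Q0,
      exists l, capacity_achieving Phi l
    & forall l, capacity_achieving Phi l -> l *m Phi = Q0].
Proof.
move=> hrows _ [[_ oQ0] heq] [sl0 eQ0] hl0.
set d := KL (row 0 Phi) Q0.
have hd : forall i, KL (row i Phi) Q0 = d by move=> i; exact: heq.
have cl0 : in_closed_simplex l0 by [].
have mi l : in_closed_simplex l -> mutual_info l Phi = d - KL (l *m Phi) Q0.
  by move=> hl; apply: mi_id.
have ub : ubound [set mutual_info l Phi | l in [set l | in_closed_simplex l]] d.
  move=> x [l hl <-]; rewrite mi // lerBlDr lerDl; apply: KL_ge0 => //.
  exact: Q_open.
have mi0 : mutual_info l0 Phi = d.
  rewrite mi // -eQ0.
  rewrite /KL big1 ?subr0 // => j _; by rewrite divff ?ln1 ?mulr0 // gt_eqF // oQ0.1.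
have capd : capacity Phi = d.
  apply/le_anti/andP; split.
    apply: ge_sup => //; by exists d, l0.
  apply: sup_upper_bound; first by split; [exists d, l0 | exists d].
  by exists l0.
split => //.
- by exists l0; split => //; rewrite capd.
- move=> l [hl]; rewrite capd mi // => e.
  apply: KL_eq0 => //; first exact: Q_open.
  lra.
Qed.
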